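(* For every $k\geq 4$, the groups $\mathrm{FB}_k$ and $\mathrm{PFB}_k$ have trivial virtual centres.
   Context: $\mathrm{FB}_k=\langle \sigma_1,\ldots,\sigma_{k-1}\mid \sigma_i^2=1,\ [\sigma_i,\sigma_j]=1 \text{ whenever } |i-j|\ge 2\rangle$, and $\mathrm{PFB}_k$ is the kernel of the homomorphism $\mathrm{FB}_k\to\mathrm{Sym}(k)$ sending $\sigma_i$ to $(i,i+1)$. The virtual centre $\mathrm{VZ}(G)$ of a group $G$ is the set of elements of $G$ that centralise some finite-index subgroup of $G$. *)

(* Defs.v *)
(* The flat braid group FB_k is modelled by its presentation:
   elements are words in the generators sigma_1..sigma_{k-1} (indexed by
   'I_(k.-1), index i standing for sigma_{i+1}), modulo the congruence
   generated by the defining relations.  Since every generator is an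
   involution, the group presented is the monoid presented by the same
   relations; product = concatenation, identity = [::], inverse = rev. *)
From mathcomp Require Import all_boot all_order all_fingroup.
Set Implicit Arguments.
Unset Strict Implicit.
Unset Printing Implicit Defensive.

Definition fbword (k : nat) := seq 'I_(k.-1).

Inductive fbeq (k : nat) : fbword k -> fbword k -> Prop :=
| fbeq_refl w : fbeq w w
| fbeq_sym u v : fbeq u v -> fbeq v u
| fbeq_trans u v w : fbeq u v -> fbeq v w -> fbeq u w
| fbeq_cat u u' v v' : fbeq u u' -> fbeq v v' -> fbeq (u ++ v) (u' ++ v')
| fbeq_invol (i : 'I_(k.-1)) : fbeq [:: i; i] [::]
| fbeq_comm (i j : 'I_(k.-1)) :
    (i.+2 <= j) || (j.+2 <= i) -> fbeq [:: i; j] [:: j; i].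

Definition fbmul k (u v : fbword k) : fbword k := u ++ v.
Definition fbone k : fbword k := [::].
Definition fbinv k (u : fbword k) : fbword k := rev u.

Definition is_subgroup k (H : fbword k -> Prop) : Prop :=
  [/\ forall u v, fbeq u v -> H u -> H v,
      H (fbone k),
      forall u v, H u -> H v -> H (fbmul u v)
    & forall u, H u -> H (fbinv u)].

Definition finite_index_in k (H G : fbword k -> Prop) : Prop :=
  is_subgroup H /\ (forall u, H u -> G u) /\
  exists reps : seq (fbword k),
    forall g, G g -> exists2 r, r \in reps & exists h, H h /\ fbeq g (fbmul r h).

Definition virtual_centre k (G : fbword k -> Prop) (g : fbword k) : Prop :=
  G g /\ exists H : fbword k -> Prop,
    finite_index_in H G /\ forall h, H h -> fbeq (fbmul g h) (fbmul h g).

Definition has_trivial_virtual_centre k (G : fbword k -> Prop) : Prop :=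
  forall g, virtual_centre G g -> fbeq g (fbone k).

Definition FB (k : nat) : fbword k -> Prop := fun _ => True.

(* the homomorphism FB_k -> Sym(k), sigma_{i+1} |-> transposition (i+1, i+2),
   where Sym(k) = {perm 'I_(k.-1).+1} (and (k.-1).+1 = k for k >= 1) *)
Definition gen_perm k (i : 'I_(k.-1)) : {perm 'I_(k.-1).+1} :=
  tperm (widen_ord (leqnSn _) i) (lift ord0 i).

Definition word_perm k (w : fbword k) : {perm 'I_(k.-1).+1} :=
  foldr (fun i p => (gen_perm i * p)%g) 1%g w.

Definition PFB (k : nat) : fbword k -> Prop := fun w => word_perm w = 1%g.

Arguments FB k : clear implicits.
Arguments PFB k : clear implicits.

(* Main.v *)
Require Import Defs.
From mathcomp Require Import all_boot all_order all_fingroup.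
From mathcomp Require Import zify.
From Stdlib Require Import ZArith Lia FunctionalExtensionality ClassicalEpsilon.

Set Implicit Arguments.
Unset Strict Implicit.
Unset Printing Implicit Defensive.

Definition vec := nat -> Z.
Definition ev (i : nat) : vec := fun j => if j == i then 1%Z else 0%Z.
Definition vadd (u v : vec) : vec := fun j => (u j + v j)%Z.
Definition vsc (c : Z) (v : vec) : vec := fun j => (c * v j)%Z.
Definition Bf (i : nat) (v : vec) : Z :=
  (v i - (match i with O => 0%Z | S p => v p end) - v i.+1)%Z.
Definition refl (i : nat) (v : vec) : vec :=
  fun j => if j == i then (v i - 2 * Bf i v)%Z else v j.

Ltac crush := repeat (case: eqP => ?; try subst); try (exfalso; lia); try lia.

Lemma refl_invol i v : refl i (refl i v) = v.
Proof.
apply: functional_extensionality => j; rewrite /refl /Bf.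
by destruct i; crush.
Qed.

Lemma refl_comm i j v : (i.+2 <= j) || (j.+2 <= i) ->
  refl i (refl j v) = refl j (refl i v).
Proof.
move=> h; apply: functional_extensionality => x; rewrite /refl /Bf.
by destruct i; destruct j; crush.
Qed.

Lemma refl_add i u v : refl i (vadd u v) = vadd (refl i u) (refl i v).
Proof.
apply: functional_extensionality => x; rewrite /refl /Bf /vadd.
by destruct i; crush.
Qed.

Lemma refl_sc i c v : refl i (vsc c v) = vsc c (refl i v).
Proof.
apply: functional_extensionality => x; rewrite /refl /Bf /vsc.
destruct i; crush; ring.
Qed.
Section A.
Variable k : nat.
Local Notation n := k.-1.
Local Notation word := (fbword k).

Definition act (w : word) (v : vec) : vec :=
  foldr (fun (c : 'I_n) f => refl c f) v w.

Lemma act_cat (u w : word) v : act (u ++ w) v = act u (act w v).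
Proof. by rewrite /act foldr_cat. Qed.

Lemma act_rcons (u : word) c v : act (rcons u c) v = act u (refl c v).
Proof. by rewrite -cats1 act_cat. Qed.

Lemma act_feq (u w : word) : fbeq u w -> forall v, act u v = act w v.
Proof.
elim.
- by [].
- by move=> ? ? _ IH v; rewrite IH.
- by move=> ? ? ? _ IH1 _ IH2 v; rewrite IH1 IH2.
- by move=> ? ? ? ? _ IH1 _ IH2 v; rewrite !act_cat IH1 IH2.
- by move=> i v /=; rewrite refl_invol.
- by move=> i j h v /=; rewrite refl_comm.
Qed.

Lemma act_add (w : word) u v : act w (vadd u v) = vadd (act w u) (act w v).
Proof. by elim: w => //= c w IH; rewrite IH refl_add. Qed.

Lemma act_sc (w : word) c v : act w (vsc c v) = vsc c (act w v).
Proof. by elim: w => //= a w IH; rewrite IH refl_sc. Qed.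

Lemma act_revK (h : word) v : act (rev h) (act h v) = v.
Proof.
elim: h v => //= c h IH v.
by rewrite rev_cons act_rcons refl_invol IH.
Qed.

Lemma act_revK' (h : word) v : act h (act (rev h) v) = v.
Proof. by rewrite -{1}(revK h) act_revK. Qed.

Lemma feq_sym (u w : word) : fbeq u w -> fbeq w u.
Proof. exact: fbeq_sym. Qed.
Lemma feq_trans (u v w : word) : fbeq u v -> fbeq v w -> fbeq u w.
Proof. exact: fbeq_trans. Qed.
Lemma feq_catl (u u' v : word) : fbeq u u' -> fbeq (u ++ v) (u' ++ v).
Proof. by move=> h; apply: fbeq_cat h (fbeq_refl _). Qed.
Lemma feq_catr (u v v' : word) : fbeq v v' -> fbeq (u ++ v) (u ++ v').
Proof. by move=> h; apply: fbeq_cat (fbeq_refl _) h. Qed.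
Lemma feq_ss (u v : word) s : fbeq (u ++ [:: s; s] ++ v) (u ++ v).
Proof. by apply: feq_catr; apply: (@fbeq_cat _ [:: s; s] [::] v v) => //; [exact: fbeq_invol|exact: fbeq_refl]. Qed.

Lemma feq_rev (u w : word) : fbeq u w -> fbeq (rev u) (rev w).
Proof.
elim.
- by move=> ?; exact: fbeq_refl.
- by move=> ? ? _ IH; exact: fbeq_sym.
- by move=> ? ? ? _ IH1 _ IH2; exact: fbeq_trans IH1 IH2.
- by move=> ? ? ? ? _ IH1 _ IH2; rewrite !rev_cat; exact: fbeq_cat.
- by move=> i; exact: fbeq_invol.
- by move=> i j h; rewrite /rev /=; apply: fbeq_comm; rewrite orbC.
Qed.

Lemma feq_revK (h u : word) : fbeq (rev h ++ h ++ u) u.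
Proof.
elim: h u => [|c h IH] u /=; first exact: fbeq_refl.
rewrite rev_cons -cats1 -catA /=.
apply: feq_trans (IH u).
apply: (feq_trans (feq_catr _ (feq_ss [::] _ c))) => /=; exact: fbeq_refl.
Qed.

Lemma feq_odd (u w : word) : fbeq u w -> odd (size u) = odd (size w).
Proof.
elim.
- by [].
- by move=> ? ? _ ->.
- by move=> ? ? ? _ -> _ ->.
- by move=> ? ? ? ? _ IH1 _ IH2; rewrite !size_cat !oddD IH1 IH2.
- by [].
- by [].
Qed.

Definition pb (P : Prop) : bool := if excluded_middle_informative P then true else false.
Lemma pbP (P : Prop) : reflect P (pb P).
Proof. by rewrite /pb; case: excluded_middle_informative => h; constructor. Qed.

Definition Lp (w : word) : pred nat := fun m => pb (exists u, fbeq u w /\ size u = m).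
Lemma Lp_ex (w : word) : exists m, Lp w m.
Proof. by exists (size w); apply/pbP; exists w; split=> //; exact: fbeq_refl. Qed.
Definition L (w : word) : nat := ex_minn (Lp_ex w).

Lemma L_le (u w : word) : fbeq u w -> L w <= size u.
Proof.
move=> h; rewrite /L; case: ex_minnP => m _ hm; apply: hm.
by apply/pbP; exists u.
Qed.

Lemma L_ex (w : word) : exists u, fbeq u w /\ size u = L w.
Proof. by rewrite /L; case: ex_minnP => m /pbP. Qed.

Lemma L_feq (u w : word) : fbeq u w -> L u = L w.
Proof.
move=> h; apply/eqP; rewrite eqn_leq.
have [u' [h1 h2]] := L_ex u; have [w' [h3 h4]] := L_ex w.
apply/andP; split.
- rewrite -h4; apply: L_le; exact: feq_trans h3 (feq_sym h).
- rewrite -h2; apply: L_le; exact: feq_trans h1 h.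
Qed.

Lemma L_size (w : word) : L w <= size w.
Proof. exact: (L_le (fbeq_refl w)). Qed.

Lemma L_cat (u w : word) : L (u ++ w) <= L u + L w.
Proof.
have [u' [h1 h2]] := L_ex u; have [w' [h3 h4]] := L_ex w.
rewrite -h2 -h4 -size_cat; apply: L_le; exact: fbeq_cat.
Qed.

Lemma L_rc (w : word) s : L (w ++ [:: s]) <= (L w).+1.
Proof.
apply: leq_trans (L_cat _ _) _; rewrite -addn1 leq_add2l.
exact: (L_size [:: s]).
Qed.

Lemma feq_rcrc (w : word) s : fbeq ((w ++ [:: s]) ++ [:: s]) w.
Proof. rewrite -catA; have := feq_ss w [::] s; rewrite !cats0 => h; exact: h. Qed.

Lemma L_rc2 (w : word) s : L w <= (L (w ++ [:: s])).+1.
Proof. by rewrite -(L_feq (feq_rcrc w s)); exact: L_rc. Qed.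

Lemma L_odd (w : word) : odd (L w) = odd (size w).
Proof. by have [u [h <-]] := L_ex w; exact: feq_odd. Qed.

Lemma L_neq (w : word) s : L (w ++ [:: s]) != L w.
Proof.
apply/negP => /eqP h; have := L_odd (w ++ [:: s]).
by rewrite h L_odd size_cat addn1 /=; case: (odd (size w)).
Qed.

Lemma L0 (w : word) : L w = 0 -> fbeq w [::].
Proof.
move=> h; have [u [h1 h2]] := L_ex w; move: h2; rewrite h => /size0nil h3.
by subst u; exact: feq_sym.
Qed.

End A.
Definition pv2 (s t : nat) (p q : Z) : vec := vadd (vsc p (ev s)) (vsc q (ev t)).

Lemma refl_ev_far t s : t <> s -> s <> t.+1 -> t <> s.+1 -> refl t (ev s) = ev s.
Proof.
move=> h1 h2 h3; apply: functional_extensionality => x; rewrite /refl /Bf /ev.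
by destruct t; crush.
Qed.

Lemma refl_ev_self s : refl s (ev s) = vsc (-1) (ev s).
Proof.
apply: functional_extensionality => x; rewrite /refl /Bf /ev /vsc.
by destruct s; crush.
Qed.

Lemma refl_pv2 s t p q : (t = s.+1 \/ s = t.+1) ->
  refl t (pv2 s t p q) = pv2 t s (2 * p - q) p.
Proof.
move=> h; apply: functional_extensionality => x; rewrite /refl /Bf /pv2 /vadd /vsc /ev.
by destruct t; crush.
Qed.

Lemma pv2_swap s t p q : pv2 s t p q = pv2 t s q p.
Proof.
apply: functional_extensionality => x; rewrite /pv2 /vadd /vsc; lia.
Qed.

Fixpoint altw (T : Type) (s t : T) (j : nat) : seq T :=
  if j is j'.+1 then rcons (altw t s j') t else [::].

Section B.
Variable k : nat.
Local Notation n := k.-1.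
Local Notation word := (fbword k).
Local Notation act := (@act k).
Local Notation L := (@L k).

Definition adj (s t : 'I_n) := (nat_of_ord t = (nat_of_ord s).+1) \/ (nat_of_ord s = (nat_of_ord t).+1).

Lemma alt_vec j : forall (s t : 'I_n), adj s t -> forall p q, (0 <= q < p)%Z ->
  exists a b, (0 <= a)%Z /\ (0 <= b)%Z /\ (0 < a + b)%Z /\
    act (altw s t j) (pv2 s t p q) = pv2 s t a b.
Proof.
elim: j => [|j IH] s t hst p q hpq /=.
  by exists p, q; split; [lia|split;[lia|split;[lia|]]].
rewrite act_rcons refl_pv2; last by case: hst; [left|right].
have hts : adj t s by case: hst; [right|left].
have [a [b [h1 [h2 [h3 ->]]]]] := IH t s hts (2 * p - q)%Z p ltac:(lia).
by exists b, a; rewrite pv2_swap; split; [lia|split;[lia|split;[lia|]]].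
Qed.

Lemma last_not_s (x : word) c s :
  L (rcons x c) = size (rcons x c) -> L (rcons x c) < L (rcons x c ++ [:: s]) ->
  c != s.
Proof.
move=> h1 h2; apply/negP => /eqP ec; subst c.
have e : fbeq (rcons x s ++ [:: s]) x by rewrite -cats1; exact: feq_rcrc.
move: h2; rewrite (L_feq e) h1 size_rcons => h2.
by have := L_size x; rewrite leqNgt ltnW.
Qed.

Lemma red_prefix (x : word) c : L (rcons x c) = size (rcons x c) -> L x = size x.
Proof.
move=> h; apply/eqP; rewrite eqn_leq L_size /=.
have := L_rc x c; rewrite cats1 h size_rcons ltnS; done.
Qed.

Definition inst (s t : 'I_n) (c : 'I_n) := (c == s) || (c == t).

Lemma dihA (x : word) : forall s t, adj s t -> all (inst s t) x ->
  L x = size x -> L x < L (x ++ [:: s]) -> x = altw s t (size x).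
Proof.
elim/last_ind: x => [//|x c IH] s t hst hall hred hlt.
have cs := last_not_s hred hlt.
have ct : c = t.
  by move: hall; rewrite all_rcons => /andP [] /orP [/eqP e|/eqP e] _ //; rewrite e eqxx in cs.
subst c.
have hts : adj t s by case: hst; [right|left].
have hall' : all (inst t s) x.
  move: hall; rewrite all_rcons => /andP [] _; apply: sub_all => c; rewrite /inst orbC.
  done.
have hred' := red_prefix hred.
have hlt' : L x < L (x ++ [:: t]) by rewrite cats1 hred hred' size_rcons.
by rewrite size_rcons /= -(IH t s hts hall' hred' hlt').
Qed.

Lemma dihC (x : word) : forall (s t : 'I_n), (s.+2 <= t) || (t.+2 <= s) ->
  all (inst s t) x ->
  L x = size x -> L x < L (x ++ [:: s]) -> act x (ev s) = ev s.
Proof.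
elim/last_ind: x => [//|x c IH] s t hst hall hred hlt.
have cs := last_not_s hred hlt.
have ct : c = t.
  by move: hall; rewrite all_rcons => /andP [] /orP [/eqP e|/eqP e] _ //; rewrite e eqxx in cs.
subst c.
have hall' : all (inst s t) x by move: hall; rewrite all_rcons => /andP [].
have hred' := red_prefix hred.
have hlt' : L x < L (x ++ [:: s]).
  have e : fbeq (rcons x t ++ [:: s]) ((x ++ [:: s]) ++ [:: t]).
    rewrite -cats1 -!catA /=; apply: feq_catr.
    by apply: fbeq_comm; rewrite orbC.
  move: hlt; rewrite (L_feq e) hred size_rcons => h.
  have := L_rc (x ++ [:: s]) t => h2.
  rewrite hred'; lia.
rewrite act_rcons refl_ev_far; first exact: IH hst hall' hred' hlt'.
- move=> e; have := val_inj e; move=> /= h; subst; move: hst; rewrite orbb; lia.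
- move: hst; lia.
- move: hst; lia.
Qed.

End B.
Section C.
Variable k : nat.
Local Notation n := k.-1.
Local Notation word := (fbword k).
Local Notation act := (@act k).
Local Notation L := (@L k).

Lemma max_exists (Q : word -> Prop) B x0 : Q x0 -> (forall x, Q x -> size x <= B) ->
  exists x, Q x /\ forall y, Q y -> size y <= size x.
Proof.
move=> hx0 hB.
suff: forall d x, Q x -> B - size x <= d -> exists x, Q x /\ forall y, Q y -> size y <= size x.
  by move/(_ B x0 hx0); apply; rewrite leq_subr.
elim=> [|d IH] x hx hd.
  exists x; split=> // y hy; have := hB y hy; lia.
case: (classic (exists y, Q y /\ size x < size y)) => [[y [hy hxy]]|hno].
  apply: (IH y hy); have := hB y hy; lia.
exists x; split=> // y hy; rewrite leqNgt; apply/negP => hxy; apply: hno; by exists y.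
Qed.

Lemma ev_pv2 (s t : nat) : ev s = pv2 s t 1 0.
Proof. apply: functional_extensionality => y; rewrite /pv2 /vadd /vsc; lia. Qed.

Lemma thm54 N : forall (w : word) (s : 'I_n), L w <= N -> L w < L (w ++ [:: s]) ->
  forall j, (0 <= act w (ev s) j)%Z.
Proof.
elim: N => [|N IH] w s hN hlt j.
  have e : fbeq w [::] by apply: L0; lia.
  rewrite (act_feq e) /= /ev; case: eqP => _; lia.
case: (posnP (L w)) => [L0w|Lpos].
  rewrite (act_feq (L0 L0w)) /= /ev; case: eqP => _; lia.
have [r [Er Sr]] := L_ex w.
case/lastP: r Er Sr => [|r' t] Er Sr.
  by move: Sr Lpos => /= <-.
have hwt : L (w ++ [:: t]) < L w.
  have e : fbeq (w ++ [:: t]) r'.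
    apply: feq_trans (feq_catl _ (feq_sym Er)) _.
    rewrite -cats1; exact: feq_rcrc.
  rewrite (L_feq e) -Sr size_rcons ltnS; exact: L_size.
have hts : t != s.
  apply/negP => /eqP ets; subst t; move: hlt hwt; lia.
pose Q := fun x : word => all (inst s t) x /\ exists v, fbeq w (v ++ x) /\ L w = L v + size x.
have Qt : Q [:: t].
  split; first by rewrite /= /inst eqxx orbT.
  exists (w ++ [:: t]); split; first by apply: feq_sym; exact: feq_rcrc.
  have := L_rc2 w t; rewrite /=; lia.
have QB : forall x, Q x -> size x <= L w by move=> x [_ [v [_ ->]]]; apply: leq_addl.
have [x [[hall [v [Ew Lw]]] hmax]] := max_exists Qt QB.
have sx : 0 < size x by have := hmax _ Qt.
have hv : L v <= N by lia.
have vs : forall c, inst s t c -> L v < L (v ++ [:: c]).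
  move=> c hc; case: (ltngtP (L v) (L (v ++ [:: c]))) => // [hgt|heq].
  - exfalso.
    have : size (c :: x) <= size x.
      apply: hmax; split; first by rewrite /= hc hall.
      exists (v ++ [:: c]); split.
        apply: feq_trans Ew _; rewrite -catA; apply: feq_sym; exact: (feq_ss v x c).
      have := L_rc2 v c; rewrite /=; lia.
    by rewrite /= ltnn.
  - by move: (L_neq v c); rewrite heq eqxx.
have hvs := IH v s hv (vs s ltac:(by rewrite /inst eqxx)).
have hvt := IH v t hv (vs t ltac:(by rewrite /inst eqxx orbT)).
have hxred : L x = size x.
  apply/eqP; rewrite eqn_leq L_size /=.
  have h1 := L_cat v x; have h2 := L_feq Ew; lia.
have hxs : L x < L (x ++ [:: s]).
  case: (ltngtP (L x) (L (x ++ [:: s]))) => // [hgt|heq].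
  - exfalso.
    have e : fbeq (w ++ [:: s]) (v ++ (x ++ [:: s])) by rewrite catA; exact: feq_catl.
    have h1 := L_feq e; have h2 := L_cat v (x ++ [:: s]); lia.
  - by move: (L_neq x s); rewrite heq eqxx.
have [a [b [ha [hb ex]]]] : exists a b, (0 <= a)%Z /\ (0 <= b)%Z /\ act x (ev s) = pv2 s t a b.
  case: (boolP ((s.+2 <= t) || (t.+2 <= s))) => hc.
  - exists 1%Z, 0%Z; split; [lia|split;[lia|]]; rewrite (dihC hc hall hxred hxs).
    exact: ev_pv2.
  - have hne : nat_of_ord s <> nat_of_ord t.
      by move=> e; move: hts; rewrite (val_inj e) eqxx.
    have hadj : adj s t by rewrite /adj; move: hc hne; lia.
    rewrite (dihA hadj hall hxred hxs).
    have [a [b [h1 [h2 [_ e]]]]] := @alt_vec k (size x) s t hadj 1%Z 0%Z ltac:(lia).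
    by exists a, b; split=> //; split=> //; rewrite (ev_pv2 s t).
rewrite (act_feq Ew) act_cat ex /pv2 act_add !act_sc /vadd /vsc.
have := hvs j; have := hvt j; nia.
Qed.

End C.
Definition zv (i : nat) : vec := vadd (ev i) (ev i.+1).
Definition pv (i : nat) (a b : Z) : vec :=
  fun j => if j == i then a else if j == i.+1 then b else 0%Z.
Definition Uf (i : nat) (v : vec) : vec := refl i (refl i.+1 v).

Lemma Uf_pv i a b : Uf i (pv i a b) = pv i (3 * a - 2 * b) (2 * a - b).
Proof.
apply: functional_extensionality => x; rewrite /Uf /refl /Bf /pv.
by destruct i; crush.
Qed.

Lemma iterU_pv m i a b : ssrnat.iter m (Uf i) (pv i a b) =
  pv i (a + 2 * Z.of_nat m * (a - b)) (b + 2 * Z.of_nat m * (a - b)).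
Proof.
elim: m => [|m IH]; first by congr pv; lia.
rewrite iterS IH Uf_pv; congr pv; lia.
Qed.

Lemma iterU_far m i v j : j <> i -> j <> i.+1 -> ssrnat.iter m (Uf i) v j = v j.
Proof.
move=> h1 h2; elim: m => [|m IH] //=.
rewrite /Uf {1}/refl; case: eqP => // _; rewrite /refl; case: eqP => // _.
Qed.

Lemma zv_pv i : zv i = pv i 1 1.
Proof. apply: functional_extensionality => x; rewrite /zv /pv /vadd /ev; crush. Qed.
Lemma ev_pv i : ev i = pv i 1 0.
Proof. apply: functional_extensionality => x; rewrite /pv /ev; crush. Qed.

Lemma core (M : vec -> vec) i m : 0 < m ->
  (forall u v, M (vadd u v) = vadd (M u) (M v)) ->
  (forall c v, M (vsc c v) = vsc c (M v)) ->
  (forall v, M (ssrnat.iter m (Uf i) v) = ssrnat.iter m (Uf i) (M v)) ->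
  exists mu, M (zv i) = vsc mu (zv i).
Proof.
move=> hm Madd Msc Mc.
have Wz : ssrnat.iter m (Uf i) (zv i) = zv i by rewrite zv_pv iterU_pv; congr pv; lia.
have We : ssrnat.iter m (Uf i) (ev i) = vadd (ev i) (vsc (2 * Z.of_nat m) (zv i)).
  rewrite ev_pv iterU_pv; apply: functional_extensionality => x.
  rewrite /pv /vadd /vsc /zv /vadd /ev; crush.
have E1 := Mc (ev i); rewrite We Madd Msc in E1.
have far : forall j, j <> i -> j <> i.+1 -> M (zv i) j = 0%Z.
  move=> j h1 h2; have := congr1 (fun f => f j) E1; cbv beta; rewrite iterU_far // /vadd /vsc.
  move=> h; have h3 : (2 * Z.of_nat m * M (zv i) j = 0)%Z by lia.
  move: h3; rewrite !Z.mul_eq_0 => -[[]|] //; lia.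
set a := M (zv i) i; set b := M (zv i) i.+1.
have Mz : M (zv i) = pv i a b.
  apply: functional_extensionality => x; rewrite /pv.
  case: eqP => [->//|h1]; case: eqP => [->//|h2]; exact: far.
have E2 := Mc (zv i); rewrite Wz Mz iterU_pv in E2.
have := congr1 (fun f => f i) E2; cbv beta; rewrite /pv eqxx => hab.
have hab' : a = b.
  have h3 : (2 * Z.of_nat m * (a - b) = 0)%Z by lia.
  move: h3; rewrite !Z.mul_eq_0 => -[[]|] //; lia.
exists a; rewrite Mz zv_pv; apply: functional_extensionality => x.
rewrite /pv /vsc; crush.
Qed.
Fixpoint pw (T : Type) (w : seq T) (m : nat) : seq T :=
  if m is m'.+1 then w ++ pw w m' else [::].

Lemma iter_iter (T : Type) (f : T -> T) c m x :
  ssrnat.iter m (ssrnat.iter c f) x = ssrnat.iter (c * m) f x.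
Proof. elim: m => [|m IH]; first by rewrite muln0. by rewrite iterS IH mulnS iterD. Qed.

Lemma eq_iter' (T : Type) (f g : T -> T) m x : (forall y, f y = g y) ->
  ssrnat.iter m f x = ssrnat.iter m g x.
Proof. by move=> h; elim: m => //= m ->. Qed.

Section D.
Variable k : nat.
Local Notation n := k.-1.
Local Notation word := (fbword k).
Local Notation act := (@act k).
Local Notation L := (@L k).

Lemma act_pw (w : word) m v : act (pw w m) v = ssrnat.iter m (act w) v.
Proof. by elim: m => //= m IH; rewrite act_cat IH. Qed.

Lemma iter_conj (h : word) (F : vec -> vec) j v :
  ssrnat.iter j (fun u => act h (F (act (rev h) u))) v =
  act h (ssrnat.iter j F (act (rev h) v)).
Proof.
elim: j => [|j IH] /=; first by rewrite act_revK'.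
by rewrite IH act_revK.
Qed.

Lemma word_perm_cat (u w : word) : word_perm (u ++ w) = (word_perm u * word_perm w)%g.
Proof. by elim: u => [|c u IH] /=; rewrite ?mul1g // IH mulgA. Qed.

Lemma word_perm_pw (w : word) m : word_perm (pw w m) = (word_perm w ^+ m)%g.
Proof. by elim: m => [|m IH] //=; rewrite word_perm_cat IH expgS. Qed.

Definition Hyp (g : word) := forall x : word, PFB k x ->
  exists2 m, 0 < m & fbeq (g ++ pw x m) (pw x m ++ g).

Lemma eig (g : word) : Hyp g -> forall (h : word) (oi oi1 : 'I_n),
  nat_of_ord oi1 = (nat_of_ord oi).+1 ->
  exists mu, act g (act h (zv oi)) = vsc mu (act h (zv oi)).
Proof.
move=> hyp h oi oi1 e1.
pose y : word := h ++ [:: oi; oi1] ++ rev h.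
pose c := #[word_perm y]%g.
pose x := pw y c.
have Px : PFB k x by rewrite /PFB word_perm_pw expg_order.
have [m m0 E] := hyp x Px.
have Ea := act_feq E.
pose W := ssrnat.iter (c * m) (Uf oi).
have ax : forall v, act (pw x m) v = act h (W (act (rev h) v)).
  move=> v; rewrite act_pw (@eq_iter' _ _ (ssrnat.iter c (act y))); last first.
    by move=> u; rewrite act_pw.
  rewrite iter_iter (@eq_iter' _ _ (fun u => act h (Uf oi (act (rev h) u)))).
    by rewrite iter_conj.
  by move=> u; rewrite /y !act_cat /= /Uf e1.
pose M := fun v => act (rev h) (act g (act h v)).
have Madd : forall u v, M (vadd u v) = vadd (M u) (M v) by move=> u v; rewrite /M !act_add.
have Msc : forall a v, M (vsc a v) = vsc a (M v) by move=> a v; rewrite /M !act_sc.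
have Mc : forall v, M (W v) = W (M v).
  move=> v; rewrite /M.
  have -> : act h (W v) = act (pw x m) (act h v) by rewrite ax act_revK.
  have := Ea (act h v); rewrite !act_cat => ->.
  by rewrite ax act_revK.
have cpos : 0 < c by exact: order_gt0.
have cm : 0 < c * m by rewrite muln_gt0 cpos m0.
have [mu hmu] := core cm Madd Msc Mc.
exists mu.
have -> : act g (act h (zv oi)) = act h (M (zv oi)) by rewrite /M act_revK'.
by rewrite hmu act_sc.
Qed.

End D.
Lemma R1 i : refl i.+2 (zv i) = vadd (zv i) (vsc 2 (ev i.+2)).
Proof. apply: functional_extensionality => x; rewrite /refl /Bf /zv /vadd /vsc /ev; crush. Qed.
Lemma R2 i : refl i (zv i.+1) = vadd (zv i.+1) (vsc 2 (ev i)).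
Proof. apply: functional_extensionality => x; rewrite /refl /Bf /zv /vadd /vsc /ev; destruct i; crush. Qed.

Section E.
Variable k : nat.
Local Notation n := k.-1.
Local Notation word := (fbword k).
Local Notation act := (@act k).
Local Notation L := (@L k).

Lemma window (g : word) : Hyp g -> forall i, i.+2 < n -> exists lam,
  [/\ act g (ev i) = vsc lam (ev i), act g (ev i.+1) = vsc lam (ev i.+1)
    & act g (ev i.+2) = vsc lam (ev i.+2)].
Proof.
move=> hyp i hi.
have h0 : i < n by lia.
have h1 : i.+1 < n by lia.
pose oi := Ordinal h0; pose oi1 := Ordinal h1; pose oi2 := Ordinal hi.
have [m1 E1] := @eig k g hyp [::] oi oi1 erefl.
have [m2 E2] := @eig k g hyp [::] oi1 oi2 erefl.
have [m3 E3] := @eig k g hyp [:: oi2] oi oi1 erefl.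
have [m4 E4] := @eig k g hyp [:: oi] oi1 oi2 erefl.
rewrite /= in E1 E2 E3 E4.
rewrite R1 in E3; rewrite R2 in E4.
rewrite /zv !act_add !act_sc in E1 E2 E3 E4.
set A := act g (ev i) in E1 E2 E3 E4 *.
set B := act g (ev i.+1) in E1 E2 E3 E4 *.
set C := act g (ev i.+2) in E1 E2 E3 E4 *.
have key : forall j, [/\ A j = (m1 * ev i j)%Z, B j = (m1 * ev i.+1 j)%Z & C j = (m1 * ev i.+2 j)%Z].
  move=> j.
  have e1 := fun j => congr1 (fun f => f j) E1.
  have e2 := fun j => congr1 (fun f => f j) E2.
  have e3 := fun j => congr1 (fun f => f j) E3.
  have e4 := fun j => congr1 (fun f => f j) E4.
  have := e1 i; have := e1 i.+1; have := e1 i.+2; have := e1 j.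
  have := e2 i; have := e2 i.+1; have := e2 i.+2; have := e2 j.
  have := e3 i; have := e3 i.+1; have := e3 i.+2; have := e3 j.
  have := e4 i; have := e4 i.+1; have := e4 i.+2; have := e4 j.
  cbv beta; rewrite /vadd /vsc /ev.
  clear e1 e2 e3 e4 E1 E2 E3 E4.
  crush; intros; split; lia.
exists m1; split; apply: functional_extensionality => j; rewrite /vsc; by case: (key j).
Qed.

Lemma lam_all (g : word) : Hyp g -> 2 < n -> exists lam,
  forall j, j < n -> act g (ev j) = vsc lam (ev j).
Proof.
move=> hyp hn.
have [l0 [e0 e1 e2]] := window hyp hn.
exists l0.
have cl : forall i, i.+2 < n -> forall j, i <= j <= i.+2 -> act g (ev j) = vsc l0 (ev j).
  elim=> [|i IH] hi j hj.
    have : j = 0 \/ j = 1 \/ j = 2 by lia.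
    by case=> [->|[->|->]].
  have [l [f0 f1 f2]] := window hyp hi.
  have ei : act g (ev i.+1) = vsc l0 (ev i.+1) by apply: IH; lia.
  have ll : l = l0.
    have := congr1 (fun f => f i.+1) ei; rewrite f0 /vsc /ev eqxx; lia.
  subst l.
  have : j = i.+1 \/ j = i.+2 \/ j = i.+3 by lia.
  by case=> [->|[->|->]].
move=> j hj.
case: (leqP j 2) => h.
  apply: (cl 0) => //; lia.
apply: (cl (j - 2)); lia.
Qed.

Lemma chain (g : word) lam : (lam < 0)%Z -> forall t (s s' : 'I_n), adj s s' ->
  act g (ev s) = vsc lam (ev s) -> act g (ev s') = vsc lam (ev s') ->
  L (g ++ altw s s' t) + t <= L g.
Proof.
move=> hl; elim=> [|t IH] s s' hss es es'.
  by rewrite cats0 addn0.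
have hs's : adj s' s by case: hss; [right|left].
have := IH s' s hs's es' es.
set w := g ++ altw s' s t => hw.
have -> : g ++ altw s s' t.+1 = w ++ [:: s'] by rewrite /= -cats1 catA.
suff : L (w ++ [:: s']) < L w by lia.
have hne : nat_of_ord s <> nat_of_ord s' by case: hss; lia.
case: (ltngtP (L w) (L (w ++ [:: s']))) => // [hlt|heq].
- exfalso.
  have pos := @thm54 k (L w) w s' (leqnn _) hlt.
  have [a [b [ha [hb [hab e]]]]] := @alt_vec k t s' s hs's 1%Z 0%Z ltac:(lia).
  have ew : act w (ev s') = vadd (vsc (a * lam) (ev s')) (vsc (b * lam) (ev s)).
    rewrite /w act_cat (ev_pv2 s' s) e /pv2 act_add !act_sc es es'.
    apply: functional_extensionality => x; rewrite /vadd /vsc; lia.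
  case: (Z.eq_dec a 0) => ha0.
  + have := pos s; rewrite ew /vadd /vsc /ev eqxx; case: eqP => // _; nia.
  + have := pos s'; rewrite ew /vadd /vsc /ev eqxx; case: eqP => [h|_]; [lia|nia].
- by move: (L_neq w s'); rewrite heq eqxx.
Qed.

Lemma main (g : word) : Hyp g -> 2 < n -> fbeq g [::].
Proof.
move=> hyp hn.
have [lam hlam] := lam_all hyp hn.
have h0 : 0 < n by lia.
have h1 : 1 < n by lia.
pose o0 := Ordinal h0; pose o1 := Ordinal h1.
case: (Z.lt_trichotomy lam 0) => [neg|[zer|pos]].
- exfalso.
  have := @chain g lam neg (L g).+1 o0 o1 (or_introl erefl) (hlam _ h0) (hlam _ h1).
  lia.
- exfalso.
  have := act_revK g (ev 0); rewrite hlam // zer act_sc => e.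
  have := congr1 (fun f => f 0) e; rewrite /vsc /ev /=; lia.
- case: (posnP (L g)) => [L0g|Lpos]; first exact: L0.
  exfalso.
  have [r [Er Sr]] := L_ex g.
  case/lastP: r Er Sr => [|r' s] Er Sr.
    by move: Sr Lpos => /= <-.
  have e : fbeq (g ++ [:: s]) r'.
    apply: feq_trans (feq_catl _ (feq_sym Er)) _.
    rewrite -cats1; exact: feq_rcrc.
  have hws : L (g ++ [:: s]) < L g by rewrite (L_feq e) -Sr size_rcons ltnS; exact: L_size.
  have hlt : L (g ++ [:: s]) < L ((g ++ [:: s]) ++ [:: s]) by rewrite (L_feq (feq_rcrc g s)).
  have := @thm54 k _ _ s (leqnn _) hlt s.
  rewrite act_cat /= refl_ev_self act_sc hlam // /vsc /ev eqxx; lia.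
Qed.

Lemma pw_add (w : word) a b : pw w (a + b) = pw w a ++ pw w b.
Proof. by elim: a => //= a IH; rewrite IH catA. Qed.

Lemma pow_in_H (H G : word -> Prop) (x : word) :
  finite_index_in H G -> (forall m, G (pw x m)) -> exists2 m, 0 < m & H (pw x m).
Proof.
case=> [[Hresp H1 Hmul Hinv] [HG [reps Hreps]]] Gx.
pose s := size reps.
have ch : forall j : 'I_s.+1, exists o : 'I_s, exists h, H h /\ fbeq (pw x j) (nth [::] reps o ++ h).
  move=> j; have [r rin [h [Hh E]]] := Hreps _ (Gx j).
  have io : index r reps < s by rewrite index_mem.
  by exists (Ordinal io), h; rewrite /= nth_index.
pose f := fun j => proj1_sig (constructive_indefinite_description _ (ch j)).
have fP : forall j : 'I_s.+1, exists h, H h /\ fbeq (pw x j) (nth [::] reps (f j) ++ h).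
  by move=> j; rewrite /f; case: constructive_indefinite_description.
have help : forall a b : 'I_s.+1, a < b -> f a = f b -> exists2 m, 0 < m & H (pw x m).
  move=> a b ab fab.
  have [h1 [Hh1 E1]] := fP a; have [h2 [Hh2 E2]] := fP b.
  rewrite fab in E1; set r := nth [::] reps (f b) in E1 E2.
  exists (b - a); first by rewrite subn_gt0.
  apply: (Hresp (rev h1 ++ h2)); last by apply: Hmul; [apply: Hinv|].
  have eb : pw x b = pw x a ++ pw x (b - a) by rewrite -pw_add subnKC // ltnW.
  apply: feq_sym.
  apply: feq_trans (feq_sym (feq_revK (pw x a) (pw x (b - a)))) _.
  rewrite -eb.
  apply: feq_trans (fbeq_cat (feq_rev E1) E2) _.
  rewrite rev_cat -catA; apply: feq_catr; exact: feq_revK.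
have : ~~ injectiveb f.
  by apply/negP => /injectiveP /leq_card; rewrite !card_ord ltnn.
case/injectivePn => j1 [j2 hne hf].
case: (ltngtP j1 j2) => h.
- exact: help h hf.
- exact: help h (esym hf).
- by move: hne; rewrite (val_inj h) eqxx.
Qed.

Lemma hyp_of (G : word -> Prop) (g : word) : virtual_centre G g ->
  (forall x, PFB k x -> forall m, G (pw x m)) -> Hyp g.
Proof.
case=> _ [H [fin comm]] hG x hx.
have [m m0 hm] := pow_in_H fin (hG x hx).
by exists m => //; exact: comm.
Qed.

End E.

Theorem corollary2p15 (k : nat) (hk : 4 <= k) :
  has_trivial_virtual_centre (FB k) /\ has_trivial_virtual_centre (PFB k).
Proof.
have hn : 2 < k.-1 by case: k hk => // k' /=; lia.
split=> g hg; apply: (main _ hn); apply: (hyp_of hg).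
- by [].
- by move=> x hx m; rewrite /PFB word_perm_pw hx expg1n.
Qed.
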